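(* $\mathfrak{icp}(\mathsf{meager}\setminus\{\emptyset\},\subseteq)=\operatorname{add}(\mathsf{meager})$.
   Context: $\mathsf{meager}$ is the ideal of meager subsets of $2^\omega$, ordered by inclusion. For a poset $(P,\le)$, $F\subseteq P$ is an incomparable family if for every $p\in P$ there is $q\in F$ with $p\not\le q$ and $q\not\le p$; $\mathfrak{icp}(P)$ is the minimal size of an incomparable family. $\operatorname{add}(\mathsf{meager})$ is the minimal size of a family of meager sets whose union is not meager. *)

(* Defs.v *)
From mathcomp Require Import all_boot all_order all_algebra.
From mathcomp Require Import all_classical all_reals all_analysis.
Set Implicit Arguments. Unset Strict Implicit. Unset Printing Implicit Defensive.
Local Open Scope classical_set_scope.

Notation Cantor := cantor_space.

Definition nowhere_dense (T : topologicalType) (A : set T) : Prop :=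
  (closure A)° = set0.

Definition meager (T : topologicalType) (A : set T) : Prop :=
  exists N : nat -> set T, (forall n, nowhere_dense (N n)) /\ A `<=` \bigcup_n N n.

Definition meager_ne (A : set Cantor) : Prop := meager A /\ A <> set0.

Definition incomparable_family (T : Type) (P : set T) (le : T -> T -> Prop)
    (F : set T) : Prop :=
  F `<=` P /\ forall p, P p -> exists2 q, F q & ~ le p q /\ ~ le q p.

Definition icp_family (F : set (set Cantor)) : Prop :=
  incomparable_family meager_ne (fun A B => A `<=` B) F.

Definition add_family (F : set (set Cantor)) : Prop :=
  F `<=` (@meager Cantor) /\ ~ meager (\bigcup_(A in F) A).

Definition min_card_family (T : Type) (Q : set T -> Prop) (F : set T) : Prop :=
  Q F /\ forall G, Q G -> (F #<= G)%card.

(* Main.v *)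
Require Import Defs.
From mathcomp Require Import all_boot all_order all_algebra.
From mathcomp Require Import all_classical all_reals all_analysis.
From mathcomp Require Import wochoice.
Set Implicit Arguments. Unset Strict Implicit. Unset Printing Implicit Defensive.
Local Open Scope classical_set_scope.

Section WO.
Variable T : choiceType.
Variable R : rel T.
Hypothesis wR : well_order R.

Lemma wo_min (P : set T) : (exists x, P x) -> exists z, P z /\ forall x, P x -> R z x.
Proof.
move=> [x Px].
have [|z [[zP zmin] _]] := @wR [pred y | `[< P y >]].
  by exists x; rewrite inE.
exists z; split; first by move: zP; rewrite inE.
by move=> y Py; apply: zmin; rewrite inE.
Qed.

Lemma wo_refl x : R x x.
Proof.
have [|z [[zP zmin] _]] := @wR [pred u | u == x].
  by exists x; rewrite inE eqxx.
move: zP; rewrite inE => /eqP zx; subst z.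
by apply: zmin; rewrite inE eqxx.
Qed.

Lemma wo_total x y : R x y \/ R y x.
Proof.
have [|z [[zP zmin] _]] := @wR [pred u | (u == x) || (u == y)].
  by exists x; rewrite inE eqxx.
move: zP; rewrite inE => /orP[/eqP zx|/eqP zy]; [subst z|subst z].
  by left; apply: zmin; rewrite inE eqxx orbT.
by right; apply: zmin; rewrite inE eqxx.
Qed.

Lemma wo_antisym x y : R x y -> R y x -> x = y.
Proof.
move=> Rxy Ryx.
have [|z [_ zu]] := @wR [pred u | (u == x) || (u == y)].
  by exists x; rewrite inE eqxx.
have hx : minimum_of R [pred u | (u == x) || (u == y)] x.
  split; first by rewrite inE eqxx.
  by move=> u; rewrite inE => /orP[/eqP->|/eqP->] //; apply: wo_refl.
have hy : minimum_of R [pred u | (u == x) || (u == y)] y.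
  split; first by rewrite inE eqxx orbT.
  by move=> u; rewrite inE => /orP[/eqP->|/eqP->] //; apply: wo_refl.
by rewrite -(zu _ hx) -(zu _ hy).
Qed.

Definition lt x y := R x y /\ x <> y.

Lemma wf_lt : well_founded lt.
Proof.
move=> a; apply: contrapT => na.
have [m [nm mmin]] := @wo_min [set x | ~ Acc lt x] (ex_intro _ a na).
apply: nm; constructor => y [Rym ym]; apply: contrapT => ny.
by apply: ym; apply: wo_antisym => //; apply: mmin.
Qed.

Section Collapse.
Variable A : set T.

Definition body (a : T) (rec : forall b, lt b a -> T) : T :=
  xget a [set x | (~ exists b (h : lt b a), A b /\ x = rec b h) /\
    forall y, (~ exists b (h : lt b a), A b /\ y = rec b h) -> R x y].

Definition col := Fix wf_lt (fun _ => T) body.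

Definition Im a x := exists b (h : lt b a), A b /\ x = col b.

Lemma colE a : col a = xget a [set x | ~ Im a x /\ forall y, ~ Im a y -> R x y].
Proof.
rewrite /col Fix_eq; last first.
  move=> x f g fg.
  have -> : f = g by apply: functional_extensionality_dep => y;
     apply: functional_extensionality_dep => p; apply: fg.
  by [].
by [].
Qed.

Lemma col_spec a : R (col a) a /\ ~ Im a (col a) /\ forall y, ~ Im a y -> R (col a) y.
Proof.
elim/(well_founded_ind wf_lt): a => a IH.
have naa : ~ Im a a.
  move=> [b [h [Ab ab]]]; have [Rbb _] := IH b h.
  case: h => Rba ba; apply: ba; apply: wo_antisym => //; by rewrite -ab in Rbb.
have ex : exists x, ~ Im a x /\ forall y, ~ Im a y -> R x y.
  have [z [zP zmin]] := @wo_min [set x | ~ Im a x] (ex_intro _ a naa).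
  by exists z.
have := xgetPex a ex; rewrite -colE => -[H1 H2].
by split => //; apply: H2.
Qed.

Lemma col_inj : {in A &, injective col}.
Proof.
move=> a a'; rewrite !in_setE => Aa Aa' e.
apply: contrapT => ne.
have [Raa'|Ra'a] := wo_total a a'.
  have [_ [H _]] := col_spec a'; apply: H.
  by exists a; exists (conj Raa' ne); split.
have [_ [H _]] := col_spec a; apply: H.
by exists a'; exists (conj Ra'a (fun h => ne (esym h))); split.
Qed.

Lemma col_down a y : A a -> lt y (col a) -> exists b, A b /\ y = col b.
Proof.
move=> Aa [Ry ny].
have [_ [_ H]] := col_spec a.
have : Im a y.
  apply: contrapT => nI; apply: ny; apply: wo_antisym => //; exact: H.
by move=> [b [_ [Ab ->]]]; exists b.
Qed.

End Collapse.

Definition J (A : set T) := col A @` A.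

Lemma J_card A : (J A #= A)%card.
Proof. exact: inj_card_eq (@col_inj A). Qed.

Lemma J_down A x y : J A x -> lt y x -> J A y.
Proof.
move=> [a Aa <-] lty; have [b [Ab ->]] := col_down Aa lty; by exists b.
Qed.

Lemma min_card_exists (Q : set T -> Prop) : (exists F, Q F) ->
  exists F, Q F /\ forall G, Q G -> (F #<= G)%card.
Proof.
move=> [F0 QF0].
have key : forall F G, Q F -> J F `<=` J G -> (F #<= G)%card.
  move=> F G _ FG.
  apply: (@card_le_trans _ _ _ (J F)); first by move: (J_card F); rewrite card_eq_le => /andP[_ ->].
  apply: (@card_le_trans _ _ _ (J G)); first exact: subset_card_le.
  by move: (J_card G); rewrite card_eq_le => /andP[].
have [[x [F [QF nJ]]]|noX] := pselect (exists x, exists F, Q F /\ ~ J F x).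
  have [m [[Fs [QFs nm]] mmin]] := @wo_min [set x | exists F, Q F /\ ~ J F x]
     (ex_intro _ x (ex_intro _ F (conj QF nJ))).
  exists Fs; split => // G QG; apply: key => // y Jy.
  apply: contrapT => nJy.
  have Rmy : R m y by apply: mmin; exists G.
  apply: (nm); apply: (J_down Jy); split => // my; subst y; exact: nm.
exists F0; split => // G QG; apply: key => // y _.
apply: contrapT => nJy; apply: noX; by exists y, G.
Qed.

End WO.
Lemma meager_sub (A B : set Cantor) : A `<=` B -> meager B -> meager A.
Proof. move=> AB [N [nN BN]]; exists N; split => //; exact: subset_trans BN. Qed.

Lemma meagerU (A B : set Cantor) : meager A -> meager B -> meager (A `|` B).
Proof.
move=> [N [nN AN]] [M [nM BM]].
exists (fun n => if odd n then M n./2 else N n./2); split.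
  by move=> n; case: (odd n).
move=> x [/AN [k _ Nk]|/BM [k _ Mk]].
  exists k.*2 => //; by rewrite odd_double doubleK.
exists k.*2.+1 => //=; by rewrite odd_double /= uphalf_double.
Qed.

Lemma set1_nowhere_dense (x : Cantor) : nowhere_dense [set x].
Proof.
rewrite /nowhere_dense.
have cl : closed [set x] by apply: compact_closed; [exact: cantor_space_hausdorff|exact: compact_set1].
rewrite -(proj1 (closure_id _) cl).
apply/seteqP; split => // y /= iy.
have yx : y = x := nbhs_singleton iy.
subst y.
apply: (proj1 perfectTP cantor_perfect x).
rewrite openE => z /= ->; exact: iy.
Qed.

Lemma meager_set1 (x : Cantor) : meager [set x].
Proof.
exists (fun _ => [set x]); split; first by move=> _; exact: set1_nowhere_dense.
by move=> y ->; exists 0%N.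
Qed.

Lemma meager0 : meager (@set0 Cantor).
Proof. apply: (@meager_sub _ [set point]) => //; exact: meager_set1. Qed.

Lemma baire_step (N : set Cantor) (V : set Cantor) : nowhere_dense N ->
  open V -> V !=set0 ->
  exists W : set Cantor, [/\ open W, W !=set0 & closure W `<=` V `\` closure N].
Proof.
move=> nN oV [v Vv].
have oD : open (V `\` closure N).
  by apply: openI => //; apply: closed_openC; exact: closed_closure.
have [a [Va nNa]] : (V `\` closure N) !=set0.
  apply: contrapT => ne.
  have sub : V `<=` closure N.
    move=> y Vy; apply: contrapT => ny; apply: ne; by exists y.
  have : (closure N)° v.
    have := oV; rewrite openE => /(_ v Vv) nv.
    exact: interiorS sub _ nv.
  by rewrite nN.
have nb : nbhs a (V `\` closure N).
  by have := oD; rewrite openE => /(_ a (conj Va nNa)).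
have [W' nW' cW'] := uniform_regular nb.
exists W'°; split.
- exact: open_interior.
- by exists a.
- by apply: subset_trans cW'; apply: closureS; exact: interior_subset.
Qed.

Lemma not_meagerT : ~ meager (@setT Cantor).
Proof.
move=> [N [nN TN]].
have step : forall (p : nat * set Cantor), exists W : set Cantor,
   (open p.2 /\ p.2 !=set0) ->
   [/\ open W, W !=set0 & closure W `<=` p.2 `\` closure (N p.1)].
  move=> [n V]; have [[oV nV]|nc] := pselect (open V /\ V !=set0).
    have [W HW] := @baire_step (N n) V (nN n) oV nV; by exists W.
  by exists set0 => h; exfalso; apply: nc.
have [g hg] := choice step.
pose fix V n := if n is k.+1 then g (k, V k) else setT.
have HV : forall n, open (V n) /\ V n !=set0.
  elim => [|n [oV nV]]; first by split; [exact: openT|exists point].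
  by have [? ? _] := hg (n, V n) (conj oV nV); split.
have HS : forall n, closure (V n.+1) `<=` V n `\` closure (N n).
  by move=> n; have [_ _ ?] := hg (n, V n) (HV n).
have mono : forall n m, (n <= m)%N -> V m `<=` V n.
  move=> n m /subnK <-; elim: (m - n)%N => [|k IH] //.
  move=> y Vy; apply: IH; rewrite addSn in Vy.
  by have [] := HS _ y (subset_closure Vy).
have := cantor_space_compact; rewrite compact_In0 => /(_ nat setT (fun n => closure (V n))).
case.
- exists (fun n => closure (V n)) => [n _|n _]; first exact: closed_closure.
  by rewrite setTI.
- move=> D' _.
  have [y Vy] := (HV (\max_(i <- finmap.enum_fset D') i)).2.
  exists y => i /= iD; apply: subset_closure.
  by apply: (mono i _ (leq_bigmax_seq _ iD isT)).
- move=> x Hx.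
  have [n _ Nn] := TN x I.
  have [_ ] := HS n x (Hx n.+1 I).
  by apply; apply: subset_closure.
Qed.

Lemma set1_ne (x : Cantor) : [set x] <> set0.
Proof. by move=> e; have : [set x] x by []; rewrite e. Qed.

Lemma icp_add (F : set (set Cantor)) : icp_family F -> add_family F.
Proof.
move=> [FP Finc]; split; first by move=> q /FP [].
move=> mU.
have [q Fq _] := Finc [set point] (conj (meager_set1 point) (@set1_ne point)).
have [_ qne] := FP q Fq.
have Une : \bigcup_(A in F) A <> set0.
  move=> e; apply: qne; apply/seteqP; split => // y qy.
  have : (\bigcup_(A in F) A) y by exists q.
  by rewrite e.
have [q' Fq' [_ nq]] := Finc _ (conj mU Une).
by apply: nq => y qy; exists q'.
Qed.

Lemma exists_add : exists G, add_family G.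
Proof.
exists [set [set x] | x in [set: Cantor]]; split.
  by move=> q [x _ <-]; exact: meager_set1.
move=> m; apply: not_meagerT; apply: meager_sub m => x _.
by exists [set x] => //; exists x.
Qed.

Lemma add_icp (G : set (set Cantor)) : add_family G ->
  exists F, icp_family F /\ (F #<= G)%card.
Proof.
move=> [GM nU].
have [A1 GA1] : exists A, G A.
  apply: contrapT => nG; apply: nU; apply: meager_sub meager0 => x [A GA _].
  by apply: nG; exists A.
pose c : Cantor := point.
pose f (A : set Cantor) := if `[< A = A1 >] then [set c] else A `\` [set c].
pose F := [set q | exists2 A, G A & q = f A /\ q <> set0].
exists F; split; last first.
  apply: (@card_le_trans _ _ _ (f @` G)); last exact: card_image_le.
  by apply: subset_card_le => q [A GA [-> _]]; exists A.
split.
  move=> q [A GA [-> ne]]; split => //.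
  rewrite /f; case: asboolP => _; first exact: meager_set1.
  by apply: meager_sub (GM _ GA) => x [].
move=> p [mp pne].
have [pc|npc] := pselect (p c).
  have [A [GA [AA1 [x [Ax [xc npx]]]]]] :
      exists A, G A /\ A <> A1 /\ exists x, A x /\ x <> c /\ ~ p x.
    apply: contrapT => nex; apply: nU.
    apply: (@meager_sub _ ((p `|` A1) `|` [set c])).
      move=> x [A GA Ax].
      have [eA|AA1] := pselect (A = A1); first by subst A; left; right.
      have [ex|xc] := pselect (x = c); first by subst x; right.
      left; left; apply: contrapT => npx; apply: nex.
      by exists A; split => //; split => //; exists x.
    apply: meagerU; last exact: meager_set1.
    by apply: meagerU => //; exact: GM.
  have fA : f A = A `\` [set c] by rewrite /f; case: asboolP.
  exists (A `\` [set c]).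
    exists A => //; split; first by rewrite fA.
    move=> e; have : (A `\` [set c]) x by split.
    by rewrite e.
  split.
    by move=> /(_ c pc) [_ /(_ erefl)].
  by move=> /(_ x (conj Ax xc)) /npx.
exists [set c].
  exists A1 => //; split; last exact: set1_ne.
  by rewrite /f; case: asboolP.
split.
  move=> pc'; apply: pne; apply/seteqP; split => // y py.
  by have := pc' y py => /= yc; subst y.
by move=> /(_ c erefl).
Qed.

Theorem mainTheorem15 :
  exists (F G : set (set cantor_space)),
    min_card_family icp_family F /\ min_card_family add_family G /\ (F #= G)%card.
Proof.
have [R wR] := well_ordering_principle (set Cantor).
have [G0 QG0] := exists_add.
have [F0 [QF0 _]] := add_icp QG0.
have [Fs [QFs minF]] := min_card_exists wR (ex_intro _ F0 QF0).
have [Gs [QGs minG]] := min_card_exists wR (ex_intro _ G0 QG0).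
exists Fs, Gs; split; first by split.
split; first by split.
apply: Cantor_Bernstein.
  have [F' [QF' F'G]] := add_icp QGs.
  exact: card_le_trans (minF _ QF') F'G.
by apply: minG; exact: icp_add.
Qed.
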